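(* Let $X$ be a $T_0$-space and consider: (1) $P_S(X)$ is $S^{\ast}$-well-filtered; (2) $P_S(X)$ is a $d^{\ast}$-space; (3) $X$ is $S^{\ast}$-well-filtered; (4) $X$ is weak well-filtered. Then $(1)\Rightarrow(2)\Rightarrow(3)\Rightarrow(4)$. Moreover, if $X$ is coherent (in particular, if $X$ is KC), then $(2)\Leftrightarrow(3)\Leftrightarrow(4)$.
   Context: For a space $X$, the specialization order is $x\le y$ iff $x\in cl\{y\}$; ${\uparrow}$ is taken with respect to it; saturated = upper set in this order. $K(X)$ is the set of nonempty compact saturated subsets of $X$; a family in $K(X)$ is filtered if any two members contain a common member. The Smyth power space $P_S(X)$ is $K(X)$ with the upper Vietoris topology, generated by the sets $\Box U=\{K\in K(X)\mid K\subseteq U\}$ for $U$ open in $X$; its specialization order is reverse inclusion. $X$ is weak well-filtered if for every filtered $\{K_i\}\subseteq K(X)$ and nonempty open $U$, $\bigcap_i K_i\subseteq U$ implies $K_i\subseteq U$ for some $i$. $X$ is $S^{\ast}$-well-filtered if for every filtered $\{K_i\}\subseteq K(X)$, $G\in K(X)$ and nonempty open $U$, $\bigcap_i K_i\cap G\subseteq U$ implies $K_i\cap G\subseteq U$ for some $i$. $X$ is a $d^{\ast}$-space if for every directed $D\subseteq X$, $x\in X$ and nonempty open $U$, $\bigcap_{d\in D}{\uparrow}d\cap{\uparrow}x\subseteq U$ implies ${\uparrow}d\cap{\uparrow}x\subseteq U$ for some $d\in D$. $X$ is coherent if the intersection of any two compact saturated sets is compact; $X$ is KC if every compact subset is closed.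 *)

(* Defs.v *)
Set Implicit Arguments.
From Stdlib Require Import List.

Definition is_topology (T : Type) (O : (T -> Prop) -> Prop) : Prop :=
  O (fun _ => True) /\
  (forall F : (T -> Prop) -> Prop, (forall U, F U -> O U) ->
      O (fun x => exists U, F U /\ U x)) /\
  (forall U V, O U -> O V -> O (fun x => U x /\ V x)).

Record space := Space {
  pt :> Type;
  opn : (pt -> Prop) -> Prop;
  opn_top : @is_topology pt opn
}.

Section Notions.
Variable X : space.

Definition subset (A B : X -> Prop) : Prop := forall x, A x -> B x.

Definition spec (x y : X) : Prop := forall U, opn X U -> U x -> U y.

Definition up (A : X -> Prop) : X -> Prop := fun y => exists x, A x /\ spec x y.
Definition up1 (x : X) : X -> Prop := fun y => spec x y.

Definition saturated (A : X -> Prop) : Prop :=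
  forall x y, A x -> spec x y -> A y.

Definition compact (A : X -> Prop) : Prop :=
  forall F : (X -> Prop) -> Prop, (forall U, F U -> opn X U) ->
    subset A (fun x => exists U, F U /\ U x) ->
    exists l : list (X -> Prop), (forall U, In U l -> F U) /\
      subset A (fun x => exists U, In U l /\ U x).

Definition closed (A : X -> Prop) : Prop := opn X (fun x => ~ A x).

Definition inK (A : X -> Prop) : Prop :=
  (exists x, A x) /\ compact A /\ saturated A.

Definition T0 : Prop := forall x y, spec x y -> spec y x -> x = y.

Definition filtered_K (I : Type) (K : I -> X -> Prop) : Prop :=
  inhabited I /\ (forall i, inK (K i)) /\
  (forall i j, exists k, subset (K k) (K i) /\ subset (K k) (K j)).

Definition nonempty_open (U : X -> Prop) : Prop := opn X U /\ exists x, U x.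

Definition weak_well_filtered : Prop :=
  forall (I : Type) (K : I -> X -> Prop) (U : X -> Prop),
    filtered_K K -> nonempty_open U ->
    subset (fun x => forall i, K i x) U -> exists i, subset (K i) U.

Definition S_star_well_filtered : Prop :=
  forall (I : Type) (K : I -> X -> Prop) (G U : X -> Prop),
    filtered_K K -> inK G -> nonempty_open U ->
    subset (fun x => (forall i, K i x) /\ G x) U ->
    exists i, subset (fun x => K i x /\ G x) U.

Definition directed (D : X -> Prop) : Prop :=
  (exists d, D d) /\
  (forall a b, D a -> D b -> exists c, D c /\ spec a c /\ spec b c).

Definition d_star_space : Prop :=
  forall (D : X -> Prop) (x : X) (U : X -> Prop),
    directed D -> nonempty_open U ->
    subset (fun y => (forall d, D d -> up1 d y) /\ up1 x y) U ->
    exists d, D d /\ subset (fun y => up1 d y /\ up1 x y) U.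

Definition coherent : Prop :=
  forall A B, compact A -> saturated A -> compact B -> saturated B ->
    compact (fun x => A x /\ B x).

Definition KC : Prop := forall A, compact A -> closed A.

End Notions.

Definition generated (T : Type) (S : (T -> Prop) -> Prop) : (T -> Prop) -> Prop :=
  fun W => forall O, is_topology O -> (forall U, S U -> O U) -> O W.

Lemma generated_top (T : Type) (S : (T -> Prop) -> Prop) :
  is_topology (generated S).
Proof.
  split; [|split].
  - intros O [H _] _; exact H.
  - intros F HF O HO HS. destruct HO as [H1 [H2 H3]].
    apply H2. intros U FU. apply (HF U FU O); [split; [|split]|]; assumption.
  - intros U V HU HV O HO HS. pose proof HO as [H1 [H2 H3]].
    apply H3; [apply HU|apply HV]; assumption.
Qed.

Definition KX (X : space) : Type := { A : X -> Prop | @inK X A }.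

Definition Box (X : space) (U : X -> Prop) : KX X -> Prop :=
  fun K => @subset X (proj1_sig K) U.

Definition upper_vietoris (X : space) : (KX X -> Prop) -> Prop :=
  generated (fun W => exists U, opn X U /\ W = @Box X U).

Definition PS (X : space) : space :=
  @Space (KX X) (@upper_vietoris X) (@generated_top _ _).

(* Main.v *)
Require Import Defs.
From Stdlib Require Import List Classical.

Lemma opn_union (X : space) (F : (X -> Prop) -> Prop) :
  (forall U, F U -> opn X U) -> opn X (fun x => exists U, F U /\ U x).
Proof. destruct (opn_top X) as [_ [H _]]. apply H. Qed.

Lemma up1_inK (X : space) (y : X) : inK X (up1 X y).
Proof.
  split; [|split].
  - exists y. intros U _ H; exact H.
  - intros F HF Hc. destruct (Hc y (fun U _ H => H)) as [U [FU Uy]].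
    exists (U :: nil). split.
    + intros V [<-|[]]; auto.
    + intros z Hz. exists U. split; [left; reflexivity|]. apply Hz; [apply HF; exact FU|exact Uy].
  - intros a b Ha Hab U HU Hy. apply Hab; [exact HU|apply Ha; auto].
Qed.

Lemma Box_open (X : space) (U : X -> Prop) : opn X U -> opn (PS X) (Box U).
Proof. intros HU O HO HS. apply HS. exists U. split; auto. Qed.

Lemma spec_PS_sub (X : space) (A B : KX X) :
  subset X (proj1_sig B) (proj1_sig A) -> spec (PS X) A B.
Proof.
  intros Hs W HW.
  set (O := fun W : KX X -> Prop => forall A B : KX X,
          subset X (proj1_sig B) (proj1_sig A) -> W A -> W B).
  assert (Ht : is_topology O).
  { split; [|split].
    - intros A0 B0 _ _; exact I.
    - intros F HF A' B' Hs' [U [FU UA]]. exists U. split; auto. exact (HF U FU A' B' Hs' UA).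
    - intros U V HU HV A' B' Hs' [UA VA]. split; [exact (HU A' B' Hs' UA)|exact (HV A' B' Hs' VA)]. }
  assert (HS : forall U, (exists V, opn X V /\ U = Box V) -> O U).
  { intros U [V [_ ->]] A' B' Hs' HA x Bx. apply HA, Hs', Bx. }
  exact (HW O Ht HS A B Hs).
Qed.

Lemma PS_spec_sub (X : space) (A B : KX X) :
  spec (PS X) A B -> subset X (proj1_sig B) (proj1_sig A).
Proof.
  intros H y By. apply NNPP; intro nA.
  set (V := fun z => exists W, (opn X W /\ ~ W y) /\ W z).
  assert (HV : opn X V) by (apply opn_union; intros W [HW _]; exact HW).
  assert (HB : Box V A).
  { intros x Ax. destruct (proj2_sig A) as [_ [_ Hsat]].
    apply NNPP; intro Hn. apply nA. apply (Hsat x y Ax).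
    intros W HW Wx. apply NNPP; intro nWy. apply Hn. exists W. auto. }
  pose proof (H (Box V) (Box_open X V HV) HB) as HB'.
  destruct (HB' y By) as [W [[_ nW] Wy]]. contradiction.
Qed.

Lemma PS_open_basis (X : space) (W : KX X -> Prop) : opn (PS X) W ->
  forall K, W K -> exists U, opn X U /\ Box U K /\ forall K', Box U K' -> W K'.
Proof.
  intros HW.
  set (O := fun W : KX X -> Prop => forall K, W K ->
     exists U, opn X U /\ Box U K /\ forall K', Box U K' -> W K').
  assert (Ht : is_topology O).
  { split; [|split].
    - intros K _. exists (fun _ => True). split; [exact (proj1 (opn_top X))|].
      split; [intros x _; exact I| intros; exact I].
    - intros F HF K [W0 [FW0 W0K]]. destruct (HF W0 FW0 K W0K) as [U [HU [BK HB]]].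
      exists U; repeat split; auto. intros K' HK'. exists W0; split; auto.
    - intros W1 W2 H1 H2 K [K1 K2].
      destruct (H1 K K1) as [U1 [HU1 [B1 HB1]]]. destruct (H2 K K2) as [U2 [HU2 [B2 HB2]]].
      exists (fun x => U1 x /\ U2 x). split; [apply (proj2 (proj2 (opn_top X))); auto|].
      split; [intros x Kx; split; [apply B1|apply B2]; auto|].
      intros K' HK'. split; [apply HB1|apply HB2]; intros x Kx; apply (HK' x Kx). }
  assert (HS : forall U, (exists V, opn X V /\ U = Box V) -> O U).
  { intros U [V [HV ->]] K HK. exists V. split; auto. }
  exact (HW O Ht HS).
Qed.

Lemma Swf_dstar (Y : space) : S_star_well_filtered Y -> d_star_space Y.
Proof.
  intros H D x U [[d0 Dd0] Hdir] HU Hsub.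
  set (K := fun p : {d : Y | D d} => up1 Y (proj1_sig p)).
  assert (Hf : filtered_K Y K).
  { split; [constructor; exact (exist _ d0 Dd0)|]. split.
    - intros [d Dd]; apply up1_inK.
    - intros [a Da] [b Db]. destruct (Hdir a b Da Db) as [c [Dc [ac bc]]].
      exists (exist _ c Dc). unfold K, up1; simpl.
      split; intros z Hz V HV Va; apply Hz; try exact HV; [apply ac|apply bc]; auto. }
  destruct (H _ K (up1 Y x) U Hf (up1_inK Y x) HU) as [[d Dd] Hd].
  - intros y [Hy Hx]. apply Hsub. split; auto. intros d Dd. exact (Hy (exist _ d Dd)).
  - exists d. split; auto.
Qed.

Lemma dstar_Swf (X : space) : d_star_space (PS X) -> S_star_well_filtered X.
Proof.
  intros H I K G U [[i0] [HK Hfil]] HG [HU [u Uu]] Hsub.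
  set (D := fun A : KX X => exists i, proj1_sig A = K i).
  set (G' := exist _ G HG : KX X).
  assert (dir : directed (PS X) D).
  { split. exists (exist _ (K i0) (HK i0)); exists i0; reflexivity.
    intros a b [i Ha] [j Hb]. destruct (Hfil i j) as [k [ki kj]].
    exists (exist _ (K k) (HK k)). split. exists k; reflexivity.
    split; apply spec_PS_sub; simpl; [rewrite Ha|rewrite Hb]; assumption. }
  assert (HU' : nonempty_open (PS X) (Box U)).
  { split. apply Box_open; auto. exists (exist _ (up1 X u) (up1_inK X u)).
    intros z Hz. apply Hz; auto. }
  destruct (H D G' (Box U) dir HU') as [d [[i Hi] Hd]].
  - intros Y [HY HYG] y Yy. apply Hsub. split.
    + intros i. exact (PS_spec_sub X _ _ (HY (exist _ (K i) (HK i)) (ex_intro _ i eq_refl)) y Yy).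
    + exact (PS_spec_sub X _ _ HYG y Yy).
  - exists i. intros y [Ky Gy].
    assert (HB : Box U (exist _ (up1 X y) (up1_inK X y))).
    { apply Hd. split; apply spec_PS_sub; simpl.
      - rewrite Hi. pose proof (HK i) as [_ [_ Hs]]. intros z Hz. exact (Hs y z Ky Hz).
      - pose proof HG as [_ [_ Hs]]. intros z Hz. exact (Hs y z Gy Hz). }
    apply HB. intros V _ HV; exact HV.
Qed.

Lemma Swf_wwf (X : space) : S_star_well_filtered X -> weak_well_filtered X.
Proof.
  intros H I K U Hf HU Hsub. pose proof Hf as [[i0] [HK Hfil]].
  destruct (H I K (K i0) U Hf (HK i0) HU) as [i Hi].
  - intros x [Hx _]; auto.
  - destruct (Hfil i i0) as [k [ki ki0]]. exists k. intros x Kx. apply Hi. split; auto.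
Qed.

Lemma wwf_Swf (X : space) : coherent X -> weak_well_filtered X -> S_star_well_filtered X.
Proof.
  intros Hco H I K G U Hf HG HU Hsub. pose proof Hf as [[i0] [HK Hfil]].
  destruct (classic (exists i, forall x, ~ (K i x /\ G x))) as [[i Hi]|Hne].
  - exists i; intros x Hx; exfalso; apply (Hi x Hx).
  - set (K' := fun i x => K i x /\ G x).
    assert (Hf' : filtered_K X K').
    { split; [constructor; exact i0|]. split.
      - intros i. destruct (HK i) as [Hn [Hc Hs]]. destruct HG as [Gn [Gc Gs]]. split; [|split].
        + apply NNPP; intro H0; apply Hne; exists i; intros x Hx; apply H0; exists x; auto.
        + apply Hco; auto.
        + intros a b [Ka Ga] ab. split; [apply (Hs a)|apply (Gs a)]; auto.
      - intros i j. destruct (Hfil i j) as [k [ki kj]]. exists k.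
        split; intros x [Kx Gx]; split; auto. }
    destruct (H I K' U Hf' HU) as [i Hi].
    + intros x Hx. apply Hsub. split; [intros i; apply (Hx i)|apply (Hx i0)].
    + exists i. exact Hi.
Qed.

Lemma Swf_dstar_PS (X : space) : coherent X -> S_star_well_filtered X -> d_star_space (PS X).
Proof.
  intros Hco H D G W [[d0 Dd0] Hdir] [HW [Y0 WY0]] Hsub.
  set (K := fun p : {d : KX X | D d} => proj1_sig (proj1_sig p)).
  assert (Hf : filtered_K X K).
  { split; [constructor; exact (exist _ d0 Dd0)|]. split.
    - intros p. exact (proj2_sig (proj1_sig p)).
    - intros [a Da] [b Db]. destruct (Hdir a b Da Db) as [c [Dc [ac bc]]].
      exists (exist _ c Dc). unfold K; simpl.
      split; apply PS_spec_sub; assumption. }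
  set (Kinf := fun x => (forall i, K i x) /\ proj1_sig G x).
  assert (Hclaim : exists U, nonempty_open X U /\ subset X Kinf U /\
                     forall K', Box U K' -> W K').
  { destruct (classic (exists x, Kinf x)) as [[x0 Hx0]|Hn].
    - assert (Hc : compact X Kinf).
      { intros F HF Hcov. destruct (classic (exists x, exists U, F U /\ U x)) as [Hv|Hv].
        + destruct (H _ K (proj1_sig G) (fun x => exists U, F U /\ U x) Hf (proj2_sig G)
                      (conj (opn_union X F HF) Hv) Hcov) as [i Hi].
          destruct (proj2_sig (proj1_sig i)) as [_ [Kc Ks]].
          destruct (proj2_sig G) as [_ [Gc Gs]].
          destruct (Hco _ _ Kc Ks Gc Gs F HF Hi) as [l [Hl1 Hl2]].
          exists l. split; auto. intros x Hx. apply Hl2. split; apply Hx.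
        + exists nil. split; [intros U []|]. intros x Hx. exfalso; apply Hv; exists x; apply Hcov; auto. }
      assert (Hsat : saturated X Kinf).
      { intros a b [Ha Ga] ab. split.
        - intros i. destruct (proj2_sig (proj1_sig i)) as [_ [_ S]]. apply (S a); [apply Ha|exact ab].
        - destruct (proj2_sig G) as [_ [_ S]]. apply (S a); auto. }
      set (Ki := exist _ Kinf (conj (ex_intro _ x0 Hx0) (conj Hc Hsat)) : KX X).
      assert (WK : W Ki).
      { apply Hsub. split.
        - intros d Dd. apply spec_PS_sub. simpl. intros x [Hx _]. exact (Hx (exist _ d Dd)).
        - apply spec_PS_sub. simpl. intros x [_ Gx]. exact Gx. }
      destruct (PS_open_basis X W HW Ki WK) as [U [HU [BK HB]]].
      exists U. split; [split; [auto|exists x0; apply BK; exact Hx0]|]. split; auto.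
    - destruct (PS_open_basis X W HW Y0 WY0) as [U [HU [BK HB]]].
      exists U. split; [split; auto|split; auto].
      + destruct (proj2_sig Y0) as [[y Yy] _]. exists y. apply BK, Yy.
      + intros x Hx; exfalso; apply Hn; exists x; auto. }
  destruct Hclaim as [U [HU [HKU HUW]]].
  destruct (H _ K (proj1_sig G) U Hf (proj2_sig G) HU HKU) as [[d Dd] Hd].
  exists d. split; auto. intros Y [Yd YG]. apply HUW. intros y Yy. apply Hd. split.
  - exact (PS_spec_sub X _ _ Yd y Yy).
  - exact (PS_spec_sub X _ _ YG y Yy).
Qed.

Lemma filter_list (T : Type) (F : (T -> Prop) -> Prop) (N : T -> Prop) (l : list (T -> Prop)) :
  (forall U, In U l -> F U \/ U = N) ->
  exists l', (forall U, In U l' -> F U) /\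
    forall x, (exists U, In U l /\ U x) -> ~ N x -> exists U, In U l' /\ U x.
Proof.
  induction l as [|a l IH]; intros Hl.
  - exists nil. split; [intros U []|]. intros x [U [[] _]].
  - destruct IH as [l' [H1 H2]]. { intros U HU; apply Hl; right; auto. }
    destruct (Hl a (or_introl eq_refl)) as [Fa| ->].
    + exists (a :: l'). split.
      * intros U [<-|HU]; auto.
      * intros x [U [[<-|HU] Ux]] nN. exists a; split; [left|]; auto.
        destruct (H2 x (ex_intro _ U (conj HU Ux)) nN) as [V [HV Vx]]. exists V; split; [right|]; auto.
    + exists l'. split; auto.
      intros x [U [[<-|HU] Ux]] nN. contradiction.
      exact (H2 x (ex_intro _ U (conj HU Ux)) nN).
Qed.

Lemma KC_coherent (X : space) : KC X -> coherent X.
Proof.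
  intros HKC A B Ac As Bc Bs F HF Hcov.
  pose proof (HKC B Bc) as HB.
  set (N := fun x => ~ B x).
  destruct (Ac (fun U => F U \/ U = N)) as [l [Hl1 Hl2]].
  - intros U [FU| ->]; [apply HF; auto|exact HB].
  - intros x Ax. destruct (classic (B x)) as [Bx|nBx].
    + destruct (Hcov x (conj Ax Bx)) as [U [FU Ux]]. exists U; auto.
    + exists N. split; auto.
  - destruct (filter_list _ F N l Hl1) as [l' [H1 H2]].
    exists l'. split; auto. intros x [Ax Bx]. apply H2; auto.
Qed.

Theorem mainTheorem20 (X : space) (hT0 : T0 X) :
  (S_star_well_filtered (PS X) -> d_star_space (PS X)) /\
  (d_star_space (PS X) -> S_star_well_filtered X) /\
  (S_star_well_filtered X -> weak_well_filtered X) /\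
  (coherent X \/ KC X ->
     (d_star_space (PS X) <-> S_star_well_filtered X) /\
     (S_star_well_filtered X <-> weak_well_filtered X)).
Proof.
  split; [apply Swf_dstar|]. split; [apply dstar_Swf|]. split; [apply Swf_wwf|].
  intros Hc. assert (Hco : coherent X) by (destruct Hc; [auto|apply KC_coherent; auto]).
  split; split.
  - apply dstar_Swf.
  - apply Swf_dstar_PS; auto.
  - apply Swf_wwf.
  - apply wwf_Swf; auto.
Qed.
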